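(* The DRN $\mathcal X^0$ with transition cocycle $P^0(0,\omega)=I_k$, $P^0(n,\omega)=A_{n-1}\cdots A_0$ ($n\ge1$, $\omega=(A_z)_{z\in\mathbb Z}$) is synchronized, and its synchronization index $J:\Omega\to\mathbb K$ is given by $e_{J(\omega)}=\lim_{n\to\infty}A_{-1}\cdots A_{-n}e_1$ for $\mu$-a.e. $\omega=(A_z)_{z\in\mathbb Z}$. An $\mathcal F$-measurable function $N:\Omega\to\mathbb N$ is a forward (respectively pull-back) synchronization time of $\mathcal X^0$ if and only if $N\ge N_0^+$ (respectively $N\ge N_0^-$) $\mu$-a.e. on $\Omega$. In particular, $\mathcal X^0$ is not uniformly synchronized.
   Context: Fix $k\ge2$, $\mathbb K=\{1,\dots,k\}$, $S=\{s_1,\dots,s_k\}$, $e_1,\dots,e_k$ the canonical basis of $\mathbb R^k$. Let $\mathcal M$ be the set of $k\times k$ matrices with entries in $\{0,1\}$ having exactly one entry $1$ in each column (so $\#\mathcal M=k^k$), and $\nu$ the uniform probability on $\mathcal M$. Let $(\Omega,\mathcal F,\mu)=\bigotimes_{z\in\mathbb Z}(\mathcal M,2^{\mathcal M},\nu)$ and $\theta$ the left shift $\theta((A_z)_{z\in\mathbb Z})=(A_{z+1})_{z\in\mathbb Z}$; this is an invertible ergodic measure-preserving system. $\mathcal X^0$ is the deterministic random network (a Markov process on $S\times\Omega$ moving from fibre $\omega$ to $\theta\omega$) whose transition probabilities $\mathbb P\{X_n=(s_i,\theta^n\omega)\mid X_0=(s_j,\omega)\}$ are the entries $P^0(n,\omega)_{i,j}$.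 $\mathcal X^0$ is synchronized if there is a measurable $N:\Omega\to\mathbb N$ such that, $\mu$-a.e., all columns of $P^0(n,\omega)$ coincide for every $n\ge N(\omega)$; uniformly synchronized if such $N$ can be chosen $\mu$-a.e. constant. A synchronization index is a measurable $J:\Omega\to\mathbb K$ with $P^0(n,\omega)e_{J(\omega)}=e_{J(\theta^n\omega)}$ for all $n\in\mathbb N_0$, $\mu$-a.e. $\omega$. A forward synchronization time is a measurable $N^+:\Omega\to\mathbb N$ with $P^0(n,\omega)e_j=e_{J(\theta^n\omega)}$ for all $j$ and all $n\ge N^+(\omega)$, $\mu$-a.e.; a pull-back synchronization time is a measurable $N^-:\Omega\to\mathbb N$ with $P^0(n,\theta^{-n}\omega)e_j=e_{J(\omega)}$ for all $j$ and $n\ge N^-(\omega)$, $\mu$-a.e. Define $N_0^+(\omega)=\min\{n\in\mathbb N:\operatorname{rank}P^0(n,\omega)=1\}$ if $\lim_{n}\operatorname{rank}P^0(n,\omega)=1$ and $N_0^+(\omega)=1$ otherwise; and $N_0^-(\omega)=\min\{n\in\mathbb N:\operatorname{rank}P^0(n,\theta^{-n}\omega)=1\}$ if $\lim_n\operatorname{rank}P^0(n,\theta^{-n}\omega)=1$ and $N_0^-(\omega)=1$ otherwise. *)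

(* Defs.v *)
From HB Require Import structures.
From mathcomp Require Import all_boot all_order all_algebra.
From mathcomp Require Import all_classical all_reals all_analysis.
Set Implicit Arguments. Unset Strict Implicit. Unset Printing Implicit Defensive.
Import Order.TTheory GRing.Theory Num.Theory.
Import numFieldNormedType.Exports.
Local Open Scope classical_set_scope.
Local Open Scope ring_scope.

(* ---------- The finite set M of k x k 0/1 matrices with exactly one 1 per column.
   Such a matrix A is encoded by the map a : 'I_k -> 'I_k sending a column j
   to the (unique) row a j carrying the entry 1 of column j; [mx_of a] is the
   matrix itself. This is a bijection onto M, so #|Mk k| = k^k. *)
Definition Mk (k : nat) : Type := {ffun 'I_k -> 'I_k}.

HB.instance Definition _ k := Finite.on (Mk k).
HB.instance Definition _ k := isPointed.Build (Mk k) [ffun i => i].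

Definition mx_of (R : realType) (k : nat) (a : Mk k) : 'M[R]_k :=
  \matrix_(i, j) (i == a j)%:R.

Definition cyl (k : nat) : set (set (int -> Mk k)) :=
  [set A | exists (z : int) (a : Mk k), A = [set w | w z = a]].
Definition Omega (k : nat) := g_sigma_algebraType (@cyl k).

(* mu = product of uniform probabilities nu on M: every finite-dimensional
   cylinder gets mass (1/k^k)^(number of coordinates). This determines mu
   uniquely (pi-lambda theorem). *)
Definition is_product_uniform (R : realType) (k : nat)
    (P : probability (Omega k) R) : Prop :=
  forall (s : seq int) (a : int -> Mk k), uniq s ->
    P [set w : Omega k | forall z, z \in s -> w z = a z]
      = (((k ^ k)%N%:R)^-1 ^+ size s)%:E.

Definition theta (k : nat) (m : int) (w : Omega k) : Omega k :=
  fun z => w (z + m).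

Fixpoint P0 (R : realType) (k : nat) (n : nat) (w : Omega k) : 'M[R]_k :=
  match n with
  | 0 => 1%:M
  | n'.+1 => mx_of R (w n'%:Z) *m P0 R n' w
  end.

Fixpoint Bprod (R : realType) (k : nat) (n : nat) (w : Omega k) : 'M[R]_k :=
  match n with
  | 0 => 1%:M
  | n'.+1 => Bprod R n' w *m mx_of R (w (- (n'.+1)%:Z))
  end.

Definition e (R : realType) (k : nat) (j : 'I_k) : 'cV[R]_k := delta_mx j 0.

(* the index "1" of the paper (first index, i.e. ordinal 0) *)
Definition first_idx (k : nat) (hk : (1 < k)%N) : 'I_k := Ordinal (ltnW hk).

Definition cols_coincide (R : realType) (k : nat) (A : 'M[R]_k) : Prop :=
  forall i j : 'I_k, col i A = col j A.

Definition measurable_idx (k : nat) (J : Omega k -> 'I_k) : Prop :=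
  forall j : 'I_k, measurable (J @^-1` [set j]).

(* N : Omega -> N = {1,2,...}, F-measurable (nat carries the discrete
   sigma-algebra in mathcomp-analysis) *)
Definition time_fun (k : nat) (N : Omega k -> nat) : Prop :=
  measurable_fun setT N /\ forall w, (0 < N w)%N.

Definition synchronized (R : realType) (k : nat) (P : probability (Omega k) R)
  : Prop :=
  exists N : Omega k -> nat, time_fun N /\
    {ae P, forall w, forall n : nat, (N w <= n)%N -> cols_coincide (P0 R n w)}.

Definition uniformly_synchronized (R : realType) (k : nat)
    (P : probability (Omega k) R) : Prop :=
  exists N : Omega k -> nat, time_fun N /\
    (exists c : nat, {ae P, forall w, N w = c}) /\
    {ae P, forall w, forall n : nat, (N w <= n)%N -> cols_coincide (P0 R n w)}.

Definition sync_index (R : realType) (k : nat) (P : probability (Omega k) R)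
    (J : Omega k -> 'I_k) : Prop :=
  measurable_idx J /\
  {ae P, forall w, forall n : nat,
      P0 R n w *m e R (J w) = e R (J (theta n%:Z w))}.

Definition forward_sync_time (R : realType) (k : nat)
    (P : probability (Omega k) R) (J : Omega k -> 'I_k) (N : Omega k -> nat)
  : Prop :=
  time_fun N /\
  {ae P, forall w, forall (j : 'I_k) (n : nat), (N w <= n)%N ->
      P0 R n w *m e R j = e R (J (theta n%:Z w))}.

Definition pullback_sync_time (R : realType) (k : nat)
    (P : probability (Omega k) R) (J : Omega k -> 'I_k) (N : Omega k -> nat)
  : Prop :=
  time_fun N /\
  {ae P, forall w, forall (j : 'I_k) (n : nat), (N w <= n)%N ->
      P0 R n (theta (- n%:Z) w) *m e R j = e R (J w)}.

Definition rank_to_1 (R : realType) (k : nat) (M : nat -> 'M[R]_k) : Prop :=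
  exists m, forall n, (m <= n)%N -> \rank (M n) = 1%N.

Lemma rank_to_1_ex (R : realType) (k : nat) (M : nat -> 'M[R]_k) :
  rank_to_1 M -> exists n, (0 < n)%N && (\rank (M n) == 1%N).
Proof.
move=> [m Hm]; exists m.+1; rewrite ltn0Sn /=; apply/eqP; apply: Hm.
exact: leqnSn.
Qed.

Definition N0_of (R : realType) (k : nat) (M : nat -> 'M[R]_k) : nat :=
  match pselect (rank_to_1 M) with
  | left H => ex_minn (rank_to_1_ex H)
  | right _ => 1%N
  end.

Definition N0plus (R : realType) (k : nat) (w : Omega k) : nat :=
  N0_of (fun n => P0 R n w).

Definition N0minus (R : realType) (k : nat) (w : Omega k) : nat :=
  N0_of (fun n => P0 R n (theta (- n%:Z) w)).

(* Main.v *)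
Require Import Defs.
From HB Require Import structures.
From mathcomp Require Import all_boot all_order all_algebra.
From mathcomp Require Import all_classical all_reals all_analysis.
From mathcomp Require Import ring lra zify.
Import Order.TTheory GRing.Theory Num.Theory.
Import numFieldNormedType.Exports.
Local Open Scope classical_set_scope.
Local Open Scope ring_scope.
Set Implicit Arguments. Unset Strict Implicit. Unset Printing Implicit Defensive.
Section Comb.
Variable k : nat.
Implicit Types (w : Omega k) (f g : 'I_k -> 'I_k).

Definition constf f := forall i j, f i = f j.

Fixpoint fwd (n : nat) w : 'I_k -> 'I_k :=
  match n with 0 => id | n'.+1 => fun j => w n'%:Z (fwd n' w j) end.
Fixpoint seg (t : int) (n : nat) w : 'I_k -> 'I_k :=
  match n with 0 => id | n'.+1 => fun j => w (t + n'%:Z) (seg t n' w j) end.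
Fixpoint bwd (n : nat) w : 'I_k -> 'I_k :=
  match n with 0 => id | n'.+1 => fun j => bwd n' w (w (- (n'.+1)%:Z) j) end.

Lemma fwd_theta t n w j : fwd n (theta t w) j = seg t n w j.
Proof. by elim: n j => //= n IH j; rewrite IH /theta addrC. Qed.

Lemma fwd_seg0 n w j : fwd n w j = seg 0 n w j.
Proof. by elim: n j => //= n IH j; rewrite IH add0r. Qed.

Lemma seg_split t a b w j : seg t (a + b)%N w j = seg (t + b%:Z) a w (seg t b w j).
Proof.
elim: a j => //= a IH j; rewrite IH; congr (w _ _).
by rewrite PoszD addrA addrAC.
Qed.

Lemma seg_theta t n m w j : seg t n (theta m w) j = seg (t + m) n w j.
Proof. by elim: n j => //= n IH j; rewrite IH /theta; congr (w _ _); rewrite addrAC. Qed.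

Lemma bwd_seg n w j : bwd n w j = seg (- n%:Z) n w j.
Proof.
elim: n j => // n IH j.
have -> : seg (- (n.+1)%:Z) n.+1 w j = seg (- (n.+1)%:Z + 1) n w (seg (- (n.+1)%:Z) 1 w j).
  by rewrite -seg_split addn1.
rewrite /= IH addr0; congr (seg _ _ _ _).
by rewrite -addn1 PoszD opprD -addrA addNr addr0.
Qed.

Lemma fwd_theta_neg n w j : fwd n (theta (- n%:Z) w) j = bwd n w j.
Proof. by rewrite fwd_theta bwd_seg. Qed.

Lemma bwd_theta n m w j : bwd (n + m)%N (theta n%:Z w) j = fwd n w (bwd m w j).
Proof.
rewrite bwd_seg seg_theta seg_split fwd_seg0 bwd_seg; congr (seg _ _ _ _).
all: rewrite PoszD; try congr (seg _ _ _ _); ring.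
Qed.

Lemma fwd_const a b w : (a <= b)%N -> constf (fwd a w) -> constf (fwd b w).
Proof.
move=> ab; rewrite -(subnK ab); elim: (b - a)%N => //= n IH /IH H i j.
by rewrite /= (H i j).
Qed.

Lemma bwd_const a b w : (a <= b)%N -> constf (bwd a w) ->
  constf (bwd b w) /\ forall j, bwd b w j = bwd a w j.
Proof.
move=> ab H; suff: forall n, constf (bwd (n + a) w) /\ forall j, bwd (n + a) w j = bwd a w j.
  by move/(_ (b - a)%N); rewrite subnK.
elim=> [|n [IH1 IH2]] //=; rewrite ?addSn; split=> [i j|j] /=.
  exact: IH1.
by rewrite IH2 (H _ j).
Qed.

Lemma fwd_dep n w w' : (forall i, (i < n)%N -> w i%:Z = w' i%:Z) ->
  forall j, fwd n w j = fwd n w' j.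
Proof.
elim: n => //= n IH H j; rewrite IH; last by move=> i lt; apply: H; exact: ltnW.
by rewrite H.
Qed.

Lemma bwd_dep n w w' : (forall i, (i < n)%N -> w (- (i.+1)%:Z) = w' (- (i.+1)%:Z)) ->
  forall j, bwd n w j = bwd n w' j.
Proof.
elim: n => //= n IH H j; rewrite IH; last by move=> i lt; apply: H; exact: ltnW.
by rewrite H.
Qed.

End Comb.

Section Mat.
Variable R : realType.

Definition fmx m n (f : 'I_n -> 'I_m) : 'M[R]_(m, n) := \matrix_(i, j) (i == f j)%:R.

Lemma fmxM m n p (f : 'I_n -> 'I_m) (g : 'I_p -> 'I_n) :
  fmx f *m fmx g = fmx (fun j => f (g j)).
Proof.
apply/matrixP => i j; rewrite !mxE (bigD1 (g j)) //= !mxE eqxx mulr1 big1 ?addr0 //.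
by move=> l /negbTE nl; rewrite !mxE eq_sym nl mulr0.
Qed.

Lemma trfmxM m n p (r : 'I_n -> 'I_m) (g : 'I_p -> 'I_m) i j :
  ((fmx r)^T *m fmx g) i j = (r i == g j)%:R.
Proof.
rewrite !mxE (bigD1 (g j)) //= !mxE eqxx mulr1 big1 ?addr0 ?(eq_sym (g j)) //.
by move=> l /negbTE nl; rewrite !mxE nl mulr0.
Qed.

Lemma fmx_ext m n (f g : 'I_n -> 'I_m) : (forall j, f j = g j) -> fmx f = fmx g.
Proof. by move=> H; apply/matrixP => i j; rewrite !mxE H. Qed.

Lemma fmx_e k (f : 'I_k -> 'I_k) (j : 'I_k) : fmx f *m e R j = e R (f j).
Proof.
apply/matrixP => i z; rewrite !mxE (bigD1 j) //= !mxE eqxx /= (ord1 z) eqxx mulr1 andbT big1 ?addr0 //.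
by move=> l /negbTE nl; rewrite !mxE nl mulr0.
Qed.

Lemma e_inj k (i j : 'I_k) : e R i = e R j -> i = j.
Proof.
move/matrixP => /(_ i 0); rewrite !mxE !eqxx /=.
by case: eqP => // _ /eqP; rewrite oner_eq0.
Qed.

Lemma P0_fmx k n (w : Omega k) : P0 R n w = fmx (fwd n w) :> 'M[R]_k.
Proof.
elim: n => /= [|n ->]; first by apply/matrixP => i j; rewrite !mxE.
by rewrite /mx_of -/(fmx _) fmxM.
Qed.

Lemma Bprod_fmx k n (w : Omega k) : Bprod R n w = fmx (bwd n w) :> 'M[R]_k.
Proof.
elim: n => /= [|n ->]; first by apply/matrixP => i j; rewrite !mxE.
by rewrite /mx_of -/(fmx _) fmxM.
Qed.

Lemma cols_fmx k (f : 'I_k -> 'I_k) : cols_coincide (fmx f) <-> constf f.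
Proof.
split=> H i j.
  move: (H i j) => /matrixP /(_ (f i) 0); rewrite !mxE eqxx.
  by case: eqP => // _ /= /eqP; rewrite oner_eq0.
by apply/matrixP => a b; rewrite !mxE (H i j).
Qed.

Lemma rank_fmx k (f : 'I_k -> 'I_k) (i0 : 'I_k) :
  \rank (fmx f) = 1%N <-> constf f.
Proof.
split=> [H a b|H].
  apply/eqP/negPn/negP => nab.
  pose r : 'I_2 -> 'I_k := fun q => if q == 0 then f a else f b.
  pose c : 'I_2 -> 'I_k := fun q => if q == 0 then a else b.
  have E : (fmx r)^T *m (fmx f *m fmx c) = 1%:M.
    rewrite fmxM; apply/matrixP => p q; rewrite trfmxM !mxE /r /c.
    case: (p =P 0) => [->|/eqP p0]; case: (q =P 0) => [->|/eqP q0] //=; rewrite ?eqxx //.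
    - by rewrite (negbTE nab) eq_sym (negbTE q0).
    - by rewrite eq_sym (negbTE nab) (negbTE p0).
    - have -> : p = q.
        by apply/val_inj; move: p q p0 q0 => [[|[|p]] hp] [[|[|q]] hq].
      by rewrite eqxx.
  have := mxrankM_maxr (fmx r)^T (fmx f *m fmx c).
  rewrite E mxrank1 => /leq_trans /(_ (mxrankM_maxl _ _)); rewrite H.
  by [].
have E : fmx f = (delta_mx (f i0) (0 : 'I_1) : 'M[R]_(k, 1)) *m (const_mx 1 : 'M[R]_(1, k)).
  apply/matrixP => i j; rewrite !mxE big_ord1 !mxE mulr1 (H j i0) /=.
  by case: (i == f i0).
apply/eqP; rewrite eqn_leq; apply/andP; split.
  by rewrite E (leq_trans (mxrankM_maxl _ _)) // mxrank_delta.
rewrite lt0n mxrank_eq0; apply/eqP => /matrixP /(_ (f i0) i0).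
by rewrite !mxE eqxx => /eqP; rewrite oner_eq0.
Qed.

End Mat.
Section Meas.
Variable k : nat.

Definition dep (s : seq int) (A : set (Omega k)) :=
  forall w w' : Omega k, (forall z, z \in s -> w z = w' z) -> A w -> A w'.

Definition upd (w : Omega k) (z : int) (a : Mk k) : Omega k :=
  fun y => if y == z then a else w y.

Lemma cyl_meas z a : measurable [set w : Omega k | w z = a].
Proof. by apply: sub_sigma_algebra; exists z, a. Qed.

Lemma dep_meas s A : dep s A -> measurable A.
Proof.
elim: s A => [|z s IH] A dA.
  have [[w Aw]|nA] := pselect (exists w, A w).
    suff -> : A = setT by exact: measurableT.
    by apply/seteqP; split=> // w' _; apply: dA Aw => y; rewrite in_nil.
  suff -> : A = set0 by exact: measurable0.
  by apply/seteqP; split=> // w' Aw'; apply: nA; exists w'.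
have -> : A = \bigcup_(a in [set: Mk k])
    ([set w : Omega k | w z = a] `&` [set w | A (upd w z a)]).
  apply/seteqP; split=> [w Aw|w [a _ [/= wz Au]]].
    exists (w z) => //; split => //=; apply: dA Aw => y _; rewrite /upd.
    by case: eqP => // ->.
  apply: dA Au => y _; rewrite /upd; case: eqP => // ->; by rewrite wz.
apply: fin_bigcup_measurable; first exact: finite_finset.
move=> a _; apply: measurableI; first exact: cyl_meas.
apply: IH => w w' H Au; apply: dA Au => y; rewrite inE => /orP [/eqP ->|ys].
  by rewrite /upd eqxx.
by rewrite /upd; case: eqP => // _; apply: H.
Qed.

Definition FC (s : seq int) (a : int -> Mk k) : set (Omega k) :=
  [set w | forall z, z \in s -> w z = a z].

Lemma FC_meas s a : measurable (FC s a).
Proof. by apply: (@dep_meas s) => w w' H Hw z zs; rewrite -H // Hw. Qed.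

Definition constb (a : Mk k) := [forall i, [forall j, a i == a j]].

Lemma constbP (a : Mk k) : reflect (constf a) (constb a).
Proof.
apply: (iffP forallP) => [H i j|H i]; first by move/forallP: (H i) => /(_ j) /eqP.
by apply/forallP => j; rewrite (H i j).
Qed.

End Meas.

Lemma ae_intro (R : realType) k (P : probability (Omega k) R) (Q : Omega k -> Prop)
  (N : set (Omega k)) : measurable N -> P N = 0%E -> (forall w, ~ Q w -> N w) ->
  {ae P, forall w, Q w}.
Proof. by move=> mN PN sub; exists N; split. Qed.

Lemma ae_elim (R : realType) k (P : probability (Omega k) R) (Q : Omega k -> Prop) :
  {ae P, forall w, Q w} ->
  exists N : set (Omega k), [/\ measurable N, P N = 0%E & forall w, ~ Q w -> N w].
Proof. by move=> [N [mN PN sub]]; exists N; split. Qed.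
Section Prob.
Variables (R : realType) (k : nat) (hk : (1 < k)%N) (P : probability (Omega k) R).
Hypothesis hP : is_product_uniform P.

Definition KK : nat := (k ^ k)%N.
Definition qq : R := (KK%:R)^-1.

Lemma KK_gt0 : (0 < KK)%N.
Proof. by rewrite /KK expn_gt0 (ltn_trans _ hk). Qed.

Lemma P_FC s a : P (FC s a) = (qq ^+ size (undup s))%:E.
Proof.
have -> : FC s a = FC (undup s) a.
  by apply/seteqP; split=> w H z zs; apply: H; rewrite ?mem_undup in zs *.
by rewrite /qq /KK hP // undup_uniq.
Qed.

Definition Eset (g : nat -> int) n : set (Omega k) :=
  [set w : Omega k | forall i, (i < n)%N -> ~ constf (w (g i))].

Lemma Eset_meas g n : measurable (Eset g n).
Proof.
apply: (@dep_meas _ [seq g i | i <- iota 0 n]) => w w' H Hw i lt.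
by rewrite -H; [exact: Hw | apply: map_f; rewrite mem_iota].
Qed.

Lemma NC_card : (#|[pred a : Mk k | ~~ constb a]| <= KK.-1)%N.
Proof.
pose i0 := first_idx hk.
pose c0 : Mk k := [ffun _ => i0].
have cT : #|{: Mk k}| = KK by rewrite /KK /Mk card_ffun card_ord.
have := cardC [pred a : Mk k | ~~ constb a]; rewrite cT.
have : (0 < #|[predC [pred a : Mk k | ~~ constb a]]|)%N.
  apply/card_gt0P; exists c0; rewrite !inE negbK; apply/constbP => i j.
  by rewrite !ffunE.
move=> H1 <-; by rewrite -subn1 -addnBA // leq_addr.
Qed.

Lemma P_E_bound (g : nat -> int) (ginj : injective g) n :
  (P (Eset g n) <= (((KK.-1)%:R * qq) ^+ n)%:E)%E.
Proof.
pose NC := [pred a : Mk k | ~~ constb a].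
pose T := {ffun 'I_n -> Mk k}.
pose Ct (t : T) := [set w : Omega k | forall i : 'I_n, w (g i) = t i].
pose s := [seq g (nat_of_ord i) | i <- enum 'I_n].
have sinj : injective (fun i : 'I_n => g i) by move=> i j /ginj /val_inj.
have us : uniq s by rewrite map_inj_uniq // enum_uniq.
have Ct_FC t : Ct t = FC s (fun z => if [pick i : 'I_n | g i == z] is Some i
                                     then t i else [ffun j => j]).
  apply/seteqP; split=> w H.
    move=> z /mapP [i _ ->]; case: pickP => [i' /eqP /sinj -> //|/(_ i)].
    by rewrite eqxx.
  move=> i; have := H (g i) (map_f _ (mem_enum _ i)).
  by case: pickP => [i' /eqP /sinj -> //|/(_ i)]; rewrite eqxx.
have PCt t : P (Ct t) = (qq ^+ n)%:E.
  by rewrite Ct_FC P_FC undup_id // size_map size_enum_ord.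
have Ctm t : measurable (Ct t) by rewrite Ct_FC; exact: FC_meas.
have sumL (r : seq T) : uniq r ->
    P (\big[setU/set0]_(t <- r) Ct t) = (\sum_(t <- r) P (Ct t))%E.
  elim: r => [_|t r IH /= /andP[tr ur]]; first by rewrite !big_nil measure0.
  rewrite !big_cons measureU; first by rewrite -(IH ur).
  - exact: Ctm.
  - by apply: bigsetU_measurable => ? _; exact: Ctm.
  apply/seteqP; split => // w [Hw]; rewrite -bigcup_seq => -[t' /= t'r Hw'].
  have tt' : t = t' by apply/ffunP => i; rewrite -Hw -Hw'.
  by move: tr; rewrite tt' t'r.
have sub : Eset g n `<=` \big[setU/set0]_(t <- enum (ffun_on NC)) Ct t.
  move=> w Hw; rewrite -bigcup_seq; exists [ffun i : 'I_n => w (g i)].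
    rewrite /= mem_enum; apply/ffun_onP => i; rewrite ffunE inE.
    by apply/negP => /constbP; apply: Hw (ltn_ord i).
  by move=> i; rewrite ffunE.
have H1 : (P (Eset g n) <= P (\big[setU/set0]_(t <- enum (ffun_on NC)) Ct t))%E.
  apply: le_measure sub; rewrite ?inE.
  - exact: Eset_meas.
  - by apply: bigsetU_measurable => ? _; exact: Ctm.
apply: le_trans H1 _.
rewrite (_ : P _ = \sum_(t <- enum (ffun_on NC)) P (Ct t))%E; last exact: sumL (enum_uniq _).
under eq_bigr do rewrite PCt.
rewrite sumEFin lee_fin big_enum sumr_const card_ffun_on card_ord -[qq ^+ n *+ _]mulr_natl.
rewrite natrX exprMn ler_wpM2r // ?exprn_ge0 ?invr_ge0 ?ler0n //.
by rewrite lerXn2r ?nnegrE ?ler0n // ler_nat NC_card.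
Qed.

Lemma ae_const (g : nat -> int) (ginj : injective g) :
  {ae P, forall w : Omega k, exists i, constf (w (g i))}.
Proof.
apply: (@ae_intro _ _ _ _ (\bigcap_n Eset g n)).
- by apply: bigcapT_measurable => n; exact: Eset_meas.
- set r := (KK.-1)%:R * qq.
  have r0 : 0 <= r by rewrite mulr_ge0 ?invr_ge0 ?ler0n.
  have r1 : r < 1.
    rewrite /r /qq ltr_pdivrMr ?ltr0n ?KK_gt0 // mul1r ltr_nat.
    by have := KK_gt0; lia.
  have H n : (P (\bigcap_n Eset g n) <= (r ^+ n)%:E)%E.
    apply: le_trans (P_E_bound ginj n); apply: le_measure; rewrite ?inE.
    + by apply: bigcapT_measurable => m; exact: Eset_meas.
    + exact: Eset_meas.
    + by move=> w Hw; apply: Hw.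
  have ge0 : (0 <= P (\bigcap_n Eset g n))%E by apply: measure_ge0.
  have le1 : (P (\bigcap_n Eset g n) <= 1)%E.
    by apply: probability_le1; apply: bigcapT_measurable => m; exact: Eset_meas.
  move: (P _) ge0 le1 H => x; case: x => [x| |] //= x0 x1 Hx.
  rewrite lee_fin in x0; congr (_%:E); apply/eqP; rewrite eq_le x0 andbT.
  have : x <= lim (r ^+ n @[n --> \oo]).
    apply: limr_ge; first by apply/cvg_ex; exists 0; apply: cvg_expr; rewrite ger0_norm.
    by near=> n; rewrite -lee_fin; apply: Hx.
  by rewrite (cvg_lim _ (cvg_expr _)) ?ger0_norm.
- move=> w nw n _ i lt ci; apply: nw; by exists i.
Unshelve. all: by end_near.
Qed.

End Prob.
Section Shift.
Variables (R : realType) (k : nat) (P : probability (Omega k) R).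
Hypothesis hP : is_product_uniform P.

Lemma theta_meas (m : int) : measurable_fun setT (theta m : Omega k -> Omega k).
Proof.
apply: (@measurability _ _ (Omega k) (Omega k) setT (theta m) (@cyl k)) => //.
move=> _ [B [z [a ->]] <-]; rewrite setTI.
exact: (@cyl_meas k (z + m) a).
Qed.

Definition GG : set (set (Omega k)) :=
  [set A | exists s a, A = FC s a] `|` [set set0].

Lemma GG_gen : measurable = <<s GG >>.
Proof.
apply/seteqP; split.
  apply: smallest_sub; first exact: smallest_sigma_algebra.
  move=> _ [z [a ->]]; apply: sub_sigma_algebra; left; exists [:: z], (fun _ => a).
  apply/seteqP; split=> w H.
    by move=> y; rewrite inE => /eqP ->.
  by apply: H; rewrite inE.
apply: smallest_sub; first exact: smallest_sigma_algebra.
move=> _ [[s [a ->]]|->]; first exact: FC_meas.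
exact: measurable0.
Qed.

Lemma GG_setI : setI_closed GG.
Proof.
move=> A B [[s [a ->]]|->]; last by rewrite set0I; right.
move=> [[t [b ->]]|->]; last by rewrite setI0; right.
have [H|H] := pselect (forall z, z \in s -> z \in t -> a z = b z).
  left; exists (s ++ t), (fun z => if z \in s then a z else b z).
  apply/seteqP; split=> w.
    move=> [Ha Hb] z; rewrite mem_cat; case: ifP => zs /=; first by move=> _; apply: Ha.
    by move=> zt; apply: Hb.
  move=> Hw; split=> z zs.
    by have := Hw z; rewrite mem_cat zs /= => ->.
  have := Hw z; rewrite mem_cat zs orbT; case: ifP => zs' -> //.
  exact: H.
right; apply/seteqP; split=> // w [Ha Hb]; apply: H => z zs zt.
by rewrite -Ha // -Hb.
Qed.

Lemma theta_pres (m : int) A : measurable A -> P (theta m @^-1` A) = P A.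
Proof.
move=> mA.
have mt := theta_meas m.
have GT : forall n : nat, GG [set: Omega k].
  move=> _; left; exists [::], (fun _ => [ffun j => j]).
  by apply/seteqP; split=> // w _ z; rewrite in_nil.
have cover : \bigcup_(n : nat) [set: Omega k] = [set: Omega k].
  by apply/seteqP; split=> // w _; exists 0%N.
have m1m2 : forall A0, GG A0 -> P A0 = pushforward P (theta m) A0.
  move=> _ [[s [a ->]]|->]; last by rewrite /pushforward preimage_set0 !measure0.
  rewrite /pushforward.
  have -> : theta m @^-1` FC s a = FC [seq z + m | z <- s] (fun y => a (y - m)).
    apply/seteqP; split=> w H z.
      by move=> /mapP [y ys ->]; rewrite addrK; apply: H.
    move=> zs; have := H (z + m) (map_f _ zs); rewrite addrK.
    by [].
  rewrite !(P_FC hP) undup_map_inj ?size_map //.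
  exact: addIr.
have goo : forall n : nat, (P [set: Omega k] < +oo)%E.
  by move=> _; rewrite probability_setT ltry.
have := @measure_unique _ R (Omega k) GG (fun _ => setT) GG_gen GG_setI GT cover P
  (pushforward P (theta m)).
move=> /(_ mt m1m2 goo A mA) ->.
by [].
Qed.

Lemma ae_theta (m : int) (Q : Omega k -> Prop) :
  {ae P, forall w, Q w} -> {ae P, forall w, Q (theta m w)}.
Proof.
move=> /ae_elim [N [mN PN sub]].
apply: (@ae_intro _ _ _ _ (theta m @^-1` N)).
- by rewrite -[X in measurable X]setTI; apply: theta_meas.
- by rewrite theta_pres.
- by move=> w /sub.
Qed.

End Shift.
Section FirstVal.
Variable k : nat.

Lemma meas_cst (Pr : Prop) : measurable [set _ : Omega k | Pr].
Proof.
have [h|h] := pselect Pr.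
  suff -> : [set _ : Omega k | Pr] = setT by exact: measurableT.
  by apply/seteqP; split.
suff -> : [set _ : Omega k | Pr] = set0 by exact: measurable0.
by apply/seteqP; split.
Qed.

Definition firstval (X : Type) (p : nat -> Omega k -> bool) (v : nat -> Omega k -> X)
  (d : X) (w : Omega k) : X :=
  match pselect (exists m, p m w) with
  | left h => v (@ex_minn (p ^~ w) h) w
  | right _ => d
  end.

Lemma firstval_meas (X : Type) (p : nat -> Omega k -> bool) (v : nat -> Omega k -> X) (d : X) :
  (forall m, measurable [set w : Omega k | p m w]) ->
  (forall m x, measurable [set w : Omega k | v m w = x]) ->
  forall x, measurable [set w : Omega k | firstval p v d w = x].
Proof.
move=> mp mv x.
have -> : [set w | firstval p v d w = x] =
  \bigcup_m ([set w | p m w] `&` (\bigcap_i [set w | (i < m)%N -> ~~ p i w])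
              `&` [set w | v m w = x]) `|`
  ((\bigcap_m (~` [set w | p m w])) `&` [set _ | d = x]).
  apply/seteqP; split=> w /=; rewrite /firstval; case: (pselect (exists m, p m w)) => [h|nh].
  - case: (ex_minnP h) => m pm minm vx; left; exists m => //; split => //; split => //.
    move=> i _ /=; apply: contraTN => pi; rewrite -leqNgt; exact: minm.
  - by move=> dx; right; split => // m _ /= pm; apply: nh; exists m.
  - case: (ex_minnP h) => m pm minm [[m' _ [[pm' mi'] vx]]|[np _]].
      have -> : m = m' => //; apply/eqP; rewrite eqn_leq minm //=.
      by rewrite leqNgt; apply/negP => lt; move: (mi' m I lt); rewrite pm.
    by exfalso; apply: (np m I).
  - case=> [[m _ [[pm _] _]]|[_ ->]] //.
    by exfalso; apply: nh; exists m.
apply: measurableU.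
  apply: bigcupT_measurable => m; apply: measurableI => //.
  apply: measurableI => //; apply: bigcapT_measurable => i /=.
  case: (ltnP i m) => h.
    have -> : [set w : Omega k | true -> ~~ p i w] = ~` [set w | p i w].
      by apply/seteqP; split=> w /=; [move=> /(_ isT) /negP|move=> /negP H _].
    exact: measurableC.
  have -> : [set w : Omega k | false -> ~~ p i w] = setT.
    by apply/seteqP; split=> // w _ /=.
  exact: measurableT.
apply: measurableI; last exact: meas_cst.
apply: bigcapT_measurable => m; exact: measurableC.
Qed.

Lemma firstval_meas_fun (p : nat -> Omega k -> bool) (v : nat -> Omega k -> nat) (d : nat) :
  (forall m, measurable [set w : Omega k | p m w]) ->
  (forall m x, measurable [set w : Omega k | v m w = x]) ->
  measurable_fun setT (firstval p v d).
Proof.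
move=> mp mv _ Y _; rewrite setTI.
have -> : firstval p v d @^-1` Y = \bigcup_(x in Y) [set w | firstval p v d w = x].
  apply/seteqP; split=> w; [move=> Yw; exists (firstval p v d w) => //|move=> [x Yx] /= E; rewrite /preimage /= E; exact: Yx].
apply: (@bigcup_measurable _ (Omega k) (fun x => [set w : Omega k | firstval p v d w = x]) Y) => x _.
exact: firstval_meas.
Qed.

Definition constfb (f : 'I_k -> 'I_k) := [forall i, [forall j, f i == f j]].

Lemma constfbP f : reflect (constf f) (constfb f).
Proof.
apply: (iffP forallP) => [H i j|H i]; first by move/forallP: (H i) => /(_ j) /eqP.
by apply/forallP => j; rewrite (H i j).
Qed.

End FirstVal.
Lemma ae_and (R : realType) k (P : probability (Omega k) R) (A B : Omega k -> Prop) :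
  {ae P, forall w, A w} -> {ae P, forall w, B w} -> {ae P, forall w, A w /\ B w}.
Proof.
move=> /ae_elim [N1 [m1 p1 s1]] /ae_elim [N2 [m2 p2 s2]].
apply: (@ae_intro _ _ _ _ (N1 `|` N2)).
- exact: measurableU.
- apply/eqP; rewrite -measure_le0.
  have : (P (N1 `|` N2) <= P N1 + P N2)%E.
    exact: measureU2.
  by rewrite p1 p2 adde0.
- by move=> w /not_andP [/s1 h|/s2 h]; [left|right].
Qed.

Lemma thetaK k (m : int) (w : Omega k) : theta m (theta (- m) w) = w.
Proof. by apply/funext => z; rewrite /theta addrK. Qed.

Section Main.
Variables (R : realType) (k : nat) (hk : (1 < k)%N) (P : probability (Omega k) R).
Hypothesis hP : is_product_uniform P.

Definition Gf (w : Omega k) := exists i : nat, constf (w i%:Z).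
Definition Gb (w : Omega k) := exists i : nat, constf (w (- (i.+1)%:Z)).

Lemma ae_Gf : {ae P, forall w, Gf w}.
Proof. by apply: (@ae_const R k hk P hP (fun i : nat => i%:Z)) => x y []. Qed.

Lemma ae_Gb : {ae P, forall w, Gb w}.
Proof.
apply: (@ae_const R k hk P hP (fun i : nat => - (i.+1)%:Z)).
by move=> x y /oppr_inj /eqP; rewrite eqz_nat eqSS => /eqP.
Qed.

Lemma Gf_fwd w : Gf w -> exists n, constf (fwd n w).
Proof. by move=> [i H]; exists i.+1 => a b /=; apply: H. Qed.

Lemma Gb_bwd w : Gb w -> exists n, constf (bwd n w).
Proof. by move=> [i H]; exists i.+1 => a b /=; rewrite (H a b). Qed.

Definition J0 (w : Omega k) : 'I_k :=
  firstval (fun m w => constfb (bwd m w)) (fun m w => bwd m w (first_idx hk))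
    (first_idx hk) w.

Lemma dep_bwd m (w w' : Omega k) :
  (forall z, z \in [seq - (i.+1)%:Z | i <- iota 0 m] -> w z = w' z) ->
  forall j, bwd m w j = bwd m w' j.
Proof.
move=> H; apply: bwd_dep => i lt; apply: H; apply: map_f.
by rewrite mem_iota.
Qed.

Lemma J0_meas : measurable_idx J0.
Proof.
move=> j; apply: firstval_meas => m.
  apply: (@dep_meas _ [seq - (i.+1)%:Z | i <- iota 0 m]) => w w' H /= /constfbP c.
  by apply/constfbP => a b; rewrite -!(dep_bwd H) (c a b).
move=> x; apply: (@dep_meas _ [seq - (i.+1)%:Z | i <- iota 0 m]) => w w' H /= <-.
by rewrite (dep_bwd H).
Qed.

Lemma J0_val w m : constf (bwd m w) -> J0 w = bwd m w (first_idx hk).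
Proof.
move=> cm; rewrite /J0 /firstval.
case: (pselect (exists m0, constfb (bwd m0 w))) => [h|nh]; last first.
  by exfalso; apply: nh; exists m; apply/constfbP.
case: (ex_minnP h) => m0 /constfbP c0 _.
case: (leqP m0 m) => h'.
  by have [_ ->] := bwd_const h' c0.
by have [_ ->] := bwd_const (ltnW h') cm.
Qed.

Lemma sync_J0 : sync_index P J0.
Proof.
split; first exact: J0_meas.
move: ae_Gb; apply: filterS => w /Gb_bwd [m cm] n.
rewrite P0_fmx fmx_e (J0_val cm).
have c2 : constf (bwd (n + m) (theta n%:Z w)) by move=> a b; rewrite !bwd_theta (cm a b).
by rewrite (J0_val c2) bwd_theta.
Qed.

Lemma key J : sync_index P J ->
  {ae P, forall w, forall m, constf (bwd m w) -> J w = bwd m w (first_idx hk)}.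
Proof.
move=> [_ HS].
have H2 : {ae P, forall w, forall n : nat, forall n' : nat,
    P0 R n' (theta (- n%:Z) w) *m e R (J (theta (- n%:Z) w)) =
    e R (J (theta n'%:Z (theta (- n%:Z) w)))}.
  apply: ae_foralln => n.
  exact: (@ae_theta R k P hP (- n%:Z)
    (fun w => forall n0 : nat, P0 R n0 w *m e R (J w) = e R (J (theta n0%:Z w))) HS).
move: H2; apply: filterS => w H m cm.
have := H m m; rewrite P0_fmx fmx_e thetaK => /e_inj.
by rewrite fwd_theta_neg => <-; apply: cm.
Qed.

Lemma part3 J : sync_index P J ->
  {ae P, forall w : Omega k,
     (fun n : nat => Bprod R n w *m e R (first_idx hk)) @ \oo --> e R (J w)}.
Proof.
move=> sJ; move: (ae_and (key sJ) ae_Gb); apply: filterS => w [H /Gb_bwd [m cm]].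
apply: cvg_near_cst; exists m => // n /= mn.
rewrite Bprod_fmx fmx_e.
have [cn en] := bwd_const mn cm.
by rewrite (H n cn).
Qed.

Lemma fwd_rank n (w : Omega k) : \rank (P0 R n w) = 1%N <-> constf (fwd n w).
Proof. by rewrite P0_fmx; exact: rank_fmx (first_idx hk). Qed.

Lemma bwd_rank n (w : Omega k) :
  \rank (P0 R n (theta (- n%:Z) w)) = 1%N <-> constf (bwd n w).
Proof. by rewrite P0_fmx (@fmx_ext R _ _ _ _ (fwd_theta_neg n w)); exact: rank_fmx (first_idx hk). Qed.

Lemma N0_le_of (M : nat -> 'M[R]_k) m :
  (0 < m)%N -> \rank (M m) = 1%N -> (N0_of M <= m)%N.
Proof.
move=> m0 r1; rewrite /N0_of; case: (pselect (rank_to_1 M)) => [h|_] //.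
case: (ex_minnP (rank_to_1_ex h)) => n _ min; apply: min.
by rewrite m0 r1 eqxx.
Qed.

Lemma N0_spec (M : nat -> 'M[R]_k) :
  (exists m, forall n, (m <= n)%N -> \rank (M n) = 1%N) -> \rank (M (N0_of M)) = 1%N.
Proof.
move=> h; rewrite /N0_of; case: (pselect (rank_to_1 M)) => [h'|nh]; last first.
  by exfalso; apply: nh.
by case: (ex_minnP (rank_to_1_ex h')) => n /andP [_ /eqP].
Qed.

Lemma fwd_char J N : sync_index P J -> time_fun N ->
  forward_sync_time P J N <-> {ae P, forall w, (N0plus R w <= N w)%N}.
Proof.
move=> sJ tN; split.
  move=> [_ H]; move: H; apply: filterS => w H.
  rewrite /N0plus; apply: N0_le_of; first exact: tN.2.
  apply/fwd_rank => a b; apply: (@e_inj R).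
  have Ha := H a (N w) (leqnn _); have Hb := H b (N w) (leqnn _).
  rewrite P0_fmx !fmx_e in Ha Hb; by rewrite Ha Hb.
move=> hle; split => //.
move: (ae_and hle (ae_and ae_Gf sJ.2)); apply: filterS => w [le [/Gf_fwd [m cm] sy]] j n Nn.
have rk : \rank (P0 R (N0plus R w) w) = 1%N.
  rewrite /N0plus; apply: (N0_spec (M := fun n => P0 R n w)); exists m => n' mn'; apply/fwd_rank; exact: fwd_const mn' cm.
move/fwd_rank in rk; have cn := fwd_const (leq_trans le Nn) rk.
by rewrite -(sy n) P0_fmx !fmx_e (cn j (J w)).
Qed.

Lemma pb_char J N : sync_index P J -> time_fun N ->
  pullback_sync_time P J N <-> {ae P, forall w, (N0minus R w <= N w)%N}.
Proof.
move=> sJ tN; split.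
  move=> [_ H]; move: H; apply: filterS => w H.
  rewrite /N0minus; apply: N0_le_of; first exact: tN.2.
  apply/bwd_rank => a b; apply: (@e_inj R).
  have Ha := H a (N w) (leqnn _); have Hb := H b (N w) (leqnn _).
  rewrite P0_fmx !fmx_e !fwd_theta_neg in Ha Hb; by rewrite Ha Hb.
move=> hle; split => //.
move: (ae_and hle (ae_and ae_Gb (key sJ))); apply: filterS => w [le [/Gb_bwd [m cm] kJ]] j n Nn.
have rk : \rank (P0 R (N0minus R w) (theta (- (N0minus R w)%:Z) w)) = 1%N.
  apply: (N0_spec (M := fun n => P0 R n (theta (- n%:Z) w))).
  exists m => n' mn'; apply/bwd_rank; exact: (bwd_const mn' cm).1.
move/bwd_rank in rk; have [cn _] := bwd_const (leq_trans le Nn) rk.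
by rewrite P0_fmx fmx_e fwd_theta_neg (kJ n cn) (cn j (first_idx hk)).
Qed.

Lemma fwd_id c (w : Omega k) :
  (forall i, (i < c)%N -> w i%:Z = [ffun j => j]) -> forall j, fwd c w j = j.
Proof.
elim: c => //= c IH H j; rewrite IH; last by move=> i lt; apply: H; exact: ltnW.
by rewrite H // ffunE.
Qed.

Lemma not_unif : ~ uniformly_synchronized P.
Proof.
move=> [N [tN [[c hc] hs]]].
have H : {ae P, forall w, constf (fwd c w)}.
  move: (ae_and hc hs); apply: filterS => w [Nc Hs].
  have := Hs c; rewrite Nc leqnn P0_fmx => /(_ isT) /(@cols_fmx R) h; exact: h.
have [Z [mZ PZ sub]] := ae_elim H.
pose C := FC [seq i%:Z | i <- iota 0 c] (fun _ => [ffun j : 'I_k => j]).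
have CZ : C `<=` Z.
  move=> w Cw; apply: sub => cf.
  have fid : forall j, fwd c w j = j.
    by apply: fwd_id => i lt; apply: Cw; apply: map_f; rewrite mem_iota.
  have := cf (first_idx hk) (Ordinal hk); rewrite !fid => h.
  by have := congr1 val h.
have PC : P C = (qq R k ^+ c)%:E.
  rewrite (P_FC hP) undup_id ?size_map ?size_iota //.
  by rewrite map_inj_uniq ?iota_uniq // => x y [].
have : (P C <= P Z)%E.
  by apply: le_measure CZ; rewrite ?inE //; exact: FC_meas.
rewrite PZ PC lee_fin leNgt => /negP; apply.
by rewrite exprn_gt0 // invr_gt0 ltr0n (KK_gt0 hk).
Qed.

Definition NT (w : Omega k) : nat :=
  firstval (fun m w => constb (w m%:Z)) (fun m _ => m.+1) 1%N w.

Lemma sync : synchronized P.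
Proof.
exists NT; split.
  split.
    apply: firstval_meas_fun => [m|m x]; last exact: meas_cst.
    by apply: (@dep_meas _ [:: m%:Z]) => w w' H /=; rewrite H // inE eqxx.
  by move=> w; rewrite /NT /firstval; case: (pselect _).
move: ae_Gf; apply: filterS => w gf n Nn; rewrite P0_fmx; apply/(@cols_fmx R).
move: Nn; rewrite /NT /firstval.
case: (pselect (exists m, constb (w m%:Z))) => [h|nh]; last first.
  by exfalso; apply: nh; case: gf => i ci; exists i; apply/constbP.
case: (ex_minnP h) => m /constbP cm _ mn.
by apply: fwd_const mn _ => a b /=; apply: cm.
Qed.

End Main.
Unset Implicit Arguments.
Theorem proposition6p1 (R : realType) (k : nat) (hk : (1 < k)%N)
    (P : probability (Omega k) R) (hP : is_product_uniform P) :
  (* X^0 is synchronized *)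
  synchronized P /\
  (* it has a synchronization index, and every synchronization index J
     satisfies e_{J(w)} = lim_n A_{-1} ... A_{-n} e_1 for a.e. w *)
  (exists J : Omega k -> 'I_k, sync_index P J) /\
  (forall J : Omega k -> 'I_k, sync_index P J ->
     {ae P, forall w : Omega k,
        (fun n : nat => Bprod R n w *m e R (first_idx hk)) @ \oo
          --> e R (J w)}) /\
  (* characterization of forward / pull-back synchronization times *)
  (forall J : Omega k -> 'I_k, sync_index P J ->
   forall N : Omega k -> nat, time_fun N ->
     (forward_sync_time P J N <-> {ae P, forall w, (N0plus R w <= N w)%N}) /\
     (pullback_sync_time P J N <-> {ae P, forall w, (N0minus R w <= N w)%N})) /\
  (* X^0 is not uniformly synchronized *)
  ~ uniformly_synchronized P.
Proof.
split; first exact: (sync hk hP).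
split; first by exists (J0 hk); exact: (sync_J0 hk hP).
split; first by move=> J sJ; exact: (part3 hk hP sJ).
split; last exact: (not_unif hk hP).
move=> J sJ N tN; split; [exact: (fwd_char hk hP sJ tN)|exact: (pb_char hk hP sJ tN)].
Qed.
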